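(* For every integer $n\ge 0$, \[ B_{n,q}=\sum_{k=0}^{n}(-1)^k2^{n-2k}k!\,S_2(n,k)\,d_{k,q}. \]
   Context: Let $p$ be a fixed odd prime, $\mathbb{C}_p$ the completion of the algebraic closure of $\mathbb{Q}_p$, with $|p|_p=1/p$. Let $q\in\mathbb{C}_p$ with $|1-q|_p<p^{-1/(p-1)}$, and $\log$ the $p$-adic logarithm. The $q$-Bernoulli numbers $B_{n,q}$ are defined by $\frac{(q-1)+\frac{q-1}{\log q}t}{qe^t-1}=\sum_{n\ge0}B_{n,q}\frac{t^n}{n!}$. The numbers $d_{n,q}$ are defined by \[ \frac{q-1+\frac{q-1}{\log q}\cdot\frac12\log(1-4t)}{q\sqrt{1-4t}-1}=\sum_{n=0}^{\infty}d_{n,q}t^n, \] for $t\in\mathbb{C}_p$ with $|t|_p<p^{-1/(p-1)}$. $S_2(n,k)$ are the Stirling numbers of the second kind, defined by $x^n=\sum_{l=0}^n S_2(n,l)(x)_l$, where $(x)_0=1$, $(x)_l=x(x-1)\cdots(x-l+1)$. *)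

(* Defs.v *)
(* Formal power series over an abstract field K of
   characteristic 0 are represented by their coefficient sequences nat -> K. *)
From HB Require Import structures.
From mathcomp Require Import all_boot all_order all_algebra.
Set Implicit Arguments. Unset Strict Implicit. Unset Printing Implicit Defensive.
Import GRing.Theory.
Local Open Scope ring_scope.

(* Stirling numbers of the second kind, by the standard recursion
   S2(n+1,k+1) = (k+1) S2(n,k+1) + S2(n,k), S2(0,0)=1, S2(n+1,0)=S2(0,k+1)=0;
   these are exactly the numbers with x^n = sum_l S2(n,l) (x)_l. *)
Fixpoint stirling2 (n k : nat) : nat :=
  match n, k with
  | 0, 0 => 1
  | 0, _.+1 => 0
  | _.+1, 0 => 0
  | n'.+1, k'.+1 => k'.+1 * stirling2 n' k'.+1 + stirling2 n' k'
  end%N.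

Section FPS.
Variable K : fieldType.

Definition fps_mul (a b : nat -> K) (n : nat) : K :=
  \sum_(k < n.+1) a k * b (n - k)%N.
Definition fps_add (a b : nat -> K) (n : nat) : K := a n + b n.
Definition fps_scale (c : K) (a : nat -> K) (n : nat) : K := c * a n.
Definition fps_C (c : K) (n : nat) : K := if n == 0%N then c else 0.
Definition fps_X (n : nat) : K := if n == 1%N then 1 else 0.
Definition fps_exp (n : nat) : K := (n`!%:R)^-1.
Definition gbinom (a : K) (m : nat) : K :=
  (\prod_(i < m) (a - i%:R)) / m`!%:R.
(* sqrt(1-4t) = sum_m binom(1/2, m) (-4t)^m  (the branch with value 1 at 0) *)
Definition fps_sqrt1m4 (n : nat) : K := gbinom (2%:R)^-1 n * (- 4%:R) ^+ n.
Definition fps_log1m4 (n : nat) : K :=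
  if n == 0%N then 0 else - ((4%:R) ^+ n / n%:R).
Definition egf (b : nat -> K) (n : nat) : K := b n / n`!%:R.

(* B is the sequence of q-Bernoulli numbers (lq stands for log q):
   (q e^t - 1) * sum_n B_n t^n/n! = (q-1) + (q-1)/log q * t *)
Definition is_qBernoulli (q lq : K) (B : nat -> K) : Prop :=
  forall n, fps_mul (fps_add (fps_scale q fps_exp) (fps_C (-1))) (egf B) n
            = fps_add (fps_C (q - 1)) (fps_scale ((q - 1) / lq) fps_X) n.

Definition is_dq (q lq : K) (d : nat -> K) : Prop :=
  forall n, fps_mul (fps_add (fps_scale q fps_sqrt1m4) (fps_C (-1))) d n
            = fps_add (fps_C (q - 1))
                      (fps_scale ((q - 1) / lq * (2%:R)^-1) fps_log1m4) n.

End FPS.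

(* Main.v *)
Require Import Defs.
From HB Require Import structures.
From mathcomp Require Import all_boot all_order all_algebra.
From mathcomp Require Import ring.
Import GRing.Theory.
Local Open Scope ring_scope.

Section Aux.
Variable K : fieldType.
Hypothesis HK : [pchar K] =i pred0.

Lemma natK_neq0 (m : nat) : (m.+1)%:R != 0 :> K.
Proof. by have /pcharf0P -> := HK. Qed.

Definition eqm (N : nat) (p q : {poly K}) := forall i, (i < N)%N -> p`_i = q`_i.

Lemma eqm_dvd N p q : eqm N p q <-> 'X^N %| p - q.
Proof.
split.
- move=> H; apply/modp_eq0P; rewrite -Pdiv.IdomainMonic.take_poly_modp.
  apply/polyP => i; rewrite coef_take_poly coef0 coefB.
  by case: ifP => // /H ->; rewrite subrr.
- move=> /dvdpP [r Hr] i Hi; apply/eqP; rewrite -subr_eq0 -coefB Hr coefMXn Hi //.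
Qed.

Lemma eqm_refl N p : eqm N p p. Proof. by []. Qed.
Lemma eqm_sym N p q : eqm N p q -> eqm N q p. Proof. by move=> H i /H ->. Qed.
Lemma eqm_trans N p q r : eqm N p q -> eqm N q r -> eqm N p r.
Proof. by move=> H1 H2 i Hi; rewrite H1 // H2. Qed.
Lemma eqm_add N p q p' q' : eqm N p q -> eqm N p' q' -> eqm N (p + p') (q + q').
Proof. by move=> H1 H2 i Hi; rewrite !coefD H1 // H2. Qed.
Lemma eqm_sub N p q p' q' : eqm N p q -> eqm N p' q' -> eqm N (p - p') (q - q').
Proof. by move=> H1 H2 i Hi; rewrite !coefB H1 // H2. Qed.
Lemma eqm_scale N a p q : eqm N p q -> eqm N (a *: p) (a *: q).
Proof. by move=> H1 i Hi; rewrite !coefZ H1. Qed.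
Lemma eqm_mul N p q p' q' : eqm N p q -> eqm N p' q' -> eqm N (p * p') (q * q').
Proof.
move=> H1 H2 i Hi; rewrite !coefM; apply: eq_bigr => j _.
have Hj : (j <= i)%N by rewrite -ltnS.
rewrite H1 ?H2 //; [exact: leq_ltn_trans (leq_subr _ _) Hi | exact: leq_ltn_trans Hj Hi].
Qed.
Lemma eqm_le N M p q : (M <= N)%N -> eqm N p q -> eqm M p q.
Proof. by move=> HMN H i Hi; apply: H; exact: leq_trans Hi HMN. Qed.

Lemma eqm_comp N U p q : 'X %| U -> eqm N p q -> eqm N (p \Po U) (q \Po U).
Proof.
move=> /dvdpP [s ->] /eqm_dvd /dvdpP [r Hr]; apply/eqm_dvd.
rewrite -comp_polyB Hr comp_polyM comp_Xn_poly exprMn.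
by apply/dvdp_mull/dvdp_mull/dvdpp.
Qed.

Lemma comp_coef0 (U p : {poly K}) : U`_0 = 0 -> (p \Po U)`_0 = p`_0.
Proof. by move=> H; rewrite -!horner_coef0 horner_comp (horner_coef0 U) H. Qed.

Lemma ode_uniq N a Y : eqm N Y^`() (a *: Y) -> Y`_0 = 0 -> eqm N.+1 Y 0.
Proof.
move=> H H0 i; elim: i => [|i IH] Hi; first by rewrite coef0.
have := H i Hi; rewrite coef_deriv coefZ IH ?(ltnW Hi) // coef0 mulr0.
move/eqP; rewrite -mulr_natr mulf_eq0 (negbTE (natK_neq0 i)) orbF coef0.
by move/eqP.
Qed.

Lemma cancel_eqm N A Z : eqm N (A * Z) 0 -> A`_0 != 0 -> eqm N Z 0.
Proof.
move=> /eqm_dvd H HA; apply/eqm_dvd; move: H; rewrite !subr0.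
rewrite Gauss_dvdpr //; apply: coprimep_expl.
by rewrite coprimep_sym coprimepX rootE horner_coef0.
Qed.

Lemma coefM_fps N (p r : {poly K}) (a b : nat -> K) i : (forall j, (j < N)%N -> p`_j = a j) ->
  (forall j, (j < N)%N -> r`_j = b j) -> (i < N)%N -> (p * r)`_i = fps_mul a b i.
Proof.
move=> H1 H2 Hi; rewrite coefM /fps_mul; apply: eq_bigr => j _.
have Hj : (j <= i)%N by rewrite -ltnS.
rewrite H1 ?H2 //; [exact: leq_ltn_trans (leq_subr _ _) Hi | exact: leq_ltn_trans Hj Hi].
Qed.


Arguments eqm_sym {N p q}. Arguments eqm_trans {N p q r}.
Arguments eqm_add {N p q p' q'}. Arguments eqm_sub {N p q p' q'}.
Arguments eqm_mul {N p q p' q'}. Arguments eqm_scale {N} a {p q}.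
Arguments eqm_comp {N U p q}.

Lemma fact_neq0 m : (m`!)%:R != 0 :> K.
Proof. by rewrite -(prednK (fact_gt0 m)) natK_neq0. Qed.

Lemma natS_neq0' i : 1 + i%:R != 0 :> K.
Proof. by rewrite addrC natr1 natK_neq0. Qed.

Definition Ea M (a : K) : {poly K} := \poly_(i < M) (a ^+ i / (i`!)%:R).

Lemma Ea_deriv M a i : (i.+1 < M)%N -> (Ea M a)^`()`_i = a * (Ea M a)`_i.
Proof.
move=> Hi; rewrite coef_deriv !coef_poly Hi (ltnW Hi).
have h1 := natK_neq0 i; have h2 := fact_neq0 i.
rewrite factS natrM exprS -mulr_natr. field. by rewrite ?natS_neq0' ?h2.
Qed.

Lemma stirling_coef M a n k : (n < M)%N ->
  ((Ea M a - 1) ^+ k)`_n * (n`!)%:R = (k`!)%:R * (stirling2 n k)%:R * a ^+ n.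
Proof.
elim: n k => [|n IH] k Hn.
- rewrite -horner_coef0 horner_exp hornerD hornerN horner_coef0 coef_poly Hn hornerC.
  rewrite expr0 fact0 divr1 subrr.
  by case: k => [|k]; rewrite ?expr0 ?expr0n /= ?mul1r ?mulr1 ?mul0r ?mulr0.
- case: k => [|k].
  + by rewrite expr0 coef1 /=; ring.
  + set F := Ea M a - 1.
    have hd := deriv_exp F k.+1.
    have h1 := congr1 (fun p : {poly K} => p`_n) hd; simpl in h1.
    have hF : F^`() = (Ea M a)^`() by rewrite /F derivB -polyC1 derivC subr0.
    have hE : eqm n.+1 (Ea M a)^`() (a *: Ea M a).
      by move=> i Hi; rewrite Ea_deriv ?coefZ //; exact: leq_ltn_trans Hi Hn.
    have h2 : (F^`() * F ^+ k)`_n = a * ((F ^+ k.+1)`_n + (F ^+ k)`_n).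
      rewrite hF (eqm_mul hE (eqm_refl _ (F ^+ k))) //.
      have -> : Ea M a = F + 1 by rewrite /F subrK.
      by rewrite -scalerAl mulrDl mul1r -exprS coefZ coefD.
    rewrite coef_deriv coefMn h2 in h1.
    have IH1 := IH k.+1 (ltnW Hn). have IH0 := IH k (ltnW Hn).
    rewrite -/F in IH1 IH0.
    set x2 := (F ^+ k.+1)`_n.+1 in h1 *. set x1 := (F ^+ k.+1)`_n in h1 IH1.
    set x0 := (F ^+ k)`_n in h1 IH0.
    rewrite -mulr_natr in h1.
    rewrite (factS n) natrM.
    have -> : x2 * ((n.+1)%:R * (n`!)%:R) = (x2 * (n.+1)%:R) * (n`!)%:R by ring.
    rewrite h1.
    have -> : a * (x1 + x0) *+ k.+1 * (n`!)%:R
              = a * (k.+1)%:R * (x1 * (n`!)%:R) + a * (k.+1)%:R * (x0 * (n`!)%:R).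
      by rewrite -mulr_natr; ring.
    rewrite IH1 IH0 (factS k) /=.
    rewrite !natrD !natrM exprS.
    ring.
Qed.

Definition Sq M : {poly K} := \poly_(i < M) fps_sqrt1m4 K i.
Definition Lg M : {poly K} := \poly_(i < M) fps_log1m4 K i.

Lemma sq0 : fps_sqrt1m4 K 0 = 1.
Proof. by rewrite /fps_sqrt1m4 /gbinom big_ord0 expr0 fact0 divr1 mulr1. Qed.

Lemma sq_rec i : fps_sqrt1m4 K i.+1 * (i.+1)%:R
                 = fps_sqrt1m4 K i * (4%:R * i%:R - 2%:R).
Proof.
rewrite /fps_sqrt1m4 /gbinom big_ord_recr /= factS natrM exprS.
have h1 := natK_neq0 i; have h2 := fact_neq0 i; have h3 := natK_neq0 1.
field. by rewrite natS_neq0' h2 h3.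
Qed.

Lemma Sq_ode N : eqm N ((Sq N.+1)^`() - 4%:R *: ('X * (Sq N.+1)^`()))
                        ((- 2%:R) *: Sq N.+1).
Proof.
move=> i Hi; rewrite coefB !coefZ coefXM.
case: i Hi => [|i] Hi /=.
- rewrite coef_deriv !coef_poly /= ltnS Hi.
  have := sq_rec 0; rewrite sq0 mulr1 => ->. ring.
- rewrite !coef_deriv !coef_poly !ltnS Hi (ltnW Hi).
  rewrite -[_ *+ i.+2]mulr_natr -[_ *+ i.+1]mulr_natr sq_rec. ring.
Qed.

Lemma Lg_ode N : eqm N ((Lg N.+1)^`() - 4%:R *: ('X * (Lg N.+1)^`()))
                        (- 4%:R)%:P.
Proof.
have lg : forall i, fps_log1m4 K i.+1 *+ i.+1 = - 4%:R ^+ i.+1.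
  move=> i; rewrite /fps_log1m4 /= -mulr_natr; have h1 := natK_neq0 i.
  field. by rewrite natS_neq0'.
move=> i Hi; rewrite coefB !coefZ coefXM coefC.
case: i Hi => [|i] Hi /=.
- rewrite coef_deriv !coef_poly /= ltnS Hi lg; ring.
- rewrite !coef_deriv !coef_poly !ltnS Hi (ltnW Hi) !lg /=; by rewrite (exprS _ i.+1) mulrN opprK addNr.
Qed.


Lemma main_thm (q lq : K) (B d : nat -> K) :
  q != 1 -> lq != 0 ->
  is_qBernoulli q lq B -> is_dq q lq d ->
  forall n : nat,
    B n = \sum_(k < n.+1)
            (-1) ^+ k * (2%:R : K) ^ (n%:Z - (2 * k)%:Z) * k`!%:R
            * (stirling2 n k)%:R * d k.
Proof.
move=> hq hl HB Hd n.
have h4 : (4%:R : K) != 0 := natK_neq0 3.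
have h2 : (2%:R : K) != 0 := natK_neq0 1.
set c := (q - 1) / lq.
pose U := (4%:R)^-1 *: (1 - Ea n.+1 2%:R).
have hU0 : U`_0 = 0.
  by rewrite /U coefZ coefB coef1 coef_poly /= expr0 fact0 divr1 subrr mulr0.
have hXU : 'X %| U.
  have : eqm 1 U 0 by move=> i; rewrite ltnS leqn0 => /eqP ->; rewrite hU0 coef0.
  by move/eqm_dvd; rewrite expr1 subr0.
have h4U : 1 - 4%:R *: U = Ea n.+1 2%:R.
  rewrite /U scalerA mulfV // scale1r; ring.
have compE : forall P, (P - 4%:R *: ('X * P)) \Po U = Ea n.+1 2%:R * (P \Po U).
  move=> P; rewrite comp_polyB comp_polyZ comp_polyM comp_polyX -h4U.
  by rewrite mulrBl mul1r scalerAl.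
have hU' : eqm n U^`() (-(2%:R^-1) *: Ea n.+1 2%:R).
  move=> i Hi; rewrite /U derivZ derivB -polyC1 derivC sub0r coefZ coefN Ea_deriv ?ltnS //.
  rewrite coefZ; field. by rewrite h2.
pose W := Sq n.+1 \Po U.
have hW' : eqm n W^`() W.
  have k1 : eqm n (Ea n.+1 2%:R * ((Sq n.+1)^`() \Po U)) ((-2%:R) *: W).
    by have := eqm_comp hXU (Sq_ode n); rewrite compE comp_polyZ.
  rewrite /W deriv_comp.
  apply: eqm_trans (eqm_mul (eqm_refl _ _) hU') _.
  rewrite -scalerAr mulrC.
  apply: eqm_trans (eqm_scale _ k1) _.
  rewrite scalerA mulNr mulrN opprK mulVf // scale1r.
  exact: eqm_refl.
have hWE : eqm n.+1 W (Ea n.+1 1).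
  have hE' : eqm n (Ea n.+1 1)^`() (Ea n.+1 1).
    by move=> i Hi; rewrite Ea_deriv ?ltnS // mul1r.
  have := @ode_uniq n 1 (W - Ea n.+1 1).
  rewrite derivB scale1r => /(_ (eqm_sub hW' hE')).
  rewrite coefB /W comp_coef0 // !coef_poly /= sq0 expr0 fact0 divr1 subrr.
  move=> /(_ erefl) H i Hi; move: (H i Hi); rewrite coefB coef0 => /eqP.
  by rewrite subr_eq0 => /eqP.
pose V := Lg n.+1 \Po U.
have hVX : eqm n.+1 V (2%:R *: 'X).
  have k1 : eqm n (Ea n.+1 2%:R * ((Lg n.+1)^`() \Po U)) ((- 4%:R)%:P).
    by have := eqm_comp hXU (Lg_ode n); rewrite compE comp_polyC.
  have hV' : eqm n V^`() (-(2%:R^-1) *: (- 4%:R)%:P).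
    rewrite /V deriv_comp.
    apply: eqm_trans (eqm_mul (eqm_refl _ _) hU') _.
    rewrite -scalerAr mulrC.
    exact: eqm_scale _ k1.
  have := @ode_uniq n 0 (V - 2%:R *: 'X).
  rewrite scale0r derivB derivZ derivX.
  have k2 : eqm n (V^`() - 2%:R *: 1) 0.
    apply: eqm_trans (eqm_sub hV' (eqm_refl _ _)) _.
    move=> i Hi; rewrite coefB !coefZ coefC coef1 coef0.
    by case: (i == 0%N) => /=; [field; rewrite ?h2 | ring].
  move=> /(_ k2).
  rewrite coefB /V comp_coef0 // coef_poly /= coefZ coefX /= /fps_log1m4 /= mulr0 subrr.
  move=> /(_ erefl) H i Hi; move: (H i Hi); rewrite coefB coef0 => /eqP.
  by rewrite subr_eq0 => /eqP.
have HBm : eqm n.+1 ((q *: Ea n.+1 1 - 1) * \poly_(i < n.+1) (B i / (i`!)%:R))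
                   ((q - 1)%:P + c *: 'X).
  move=> i Hi.
  rewrite (@coefM_fps n.+1 _ _ (fps_add (fps_scale q (fps_exp K)) (fps_C (-1))) (egf B) i _ _ Hi).
  - rewrite HB /fps_add /fps_C /fps_scale /fps_X coefD coefC coefZ coefX.
    by case: (i == 1%N).
  - move=> j Hj; rewrite coefB coefZ coef1 coef_poly Hj /fps_add /fps_scale /fps_C /fps_exp expr1n.
    by case: (j == 0%N) => /=; ring.
  - by move=> j Hj; rewrite coef_poly Hj.
have Hdm : eqm n.+1 ((q *: Sq n.+1 - 1) * \poly_(i < n.+1) d i)
                   ((q - 1)%:P + (c * 2%:R^-1) *: Lg n.+1).
  move=> i Hi.
  rewrite (@coefM_fps n.+1 _ _ (fps_add (fps_scale q (fps_sqrt1m4 K)) (fps_C (-1))) d i _ _ Hi).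
  - rewrite Hd /fps_add /fps_C /fps_scale coefD coefC coefZ coef_poly Hi.
    by [].
  - move=> j Hj; rewrite coefB coefZ coef1 coef_poly Hj /fps_add /fps_scale /fps_C.
    by case: (j == 0%N) => /=; ring.
  - by move=> j Hj; rewrite coef_poly Hj.
pose DU := \poly_(i < n.+1) d i \Po U.
have c1 : 1 \Po U = 1 := (comp_poly_multiplicative U).2.
have HdU : eqm n.+1 ((q *: W - 1) * DU) ((q - 1)%:P + (c * 2%:R^-1) *: V).
  have := eqm_comp hXU Hdm.
  by rewrite comp_polyM comp_polyB comp_polyZ c1 comp_polyD comp_polyC comp_polyZ.
have hA : eqm n.+1 ((q *: Ea n.+1 1 - 1) * DU) ((q *: Ea n.+1 1 - 1) * \poly_(i < n.+1) (B i / (i`!)%:R)).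
  apply: eqm_trans (eqm_mul (eqm_sub (eqm_scale q (eqm_sym hWE)) (eqm_refl _ 1)) (eqm_refl _ DU)) _.
  apply: eqm_trans HdU _.
  apply: eqm_trans (eqm_add (eqm_refl _ _) (eqm_scale _ hVX)) _.
  rewrite scalerA -mulrA mulVf // mulr1.
  exact: eqm_sym HBm.
have hDB : eqm n.+1 (DU - \poly_(i < n.+1) (B i / (i`!)%:R)) 0.
  apply: (@cancel_eqm _ (q *: Ea n.+1 1 - 1)).
  - move=> i Hi; rewrite mulrBr coefB (hA i Hi) subrr coef0 //.
  - by rewrite coefB coefZ coef1 coef_poly /= expr0 fact0 divr1 mulr1 subr_eq0.
have hn : DU`_n = B n / (n`!)%:R.
  move: (hDB n (ltnSn n)); rewrite coefB coef0 coef_poly ltnSn => /eqP.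
  by rewrite subr_eq0 => /eqP.
have hU2 : U = (- (4%:R)^-1) *: (Ea n.+1 2%:R - 1).
  by rewrite /U scaleNr -scalerN opprB.
have hDU : DU`_n = \sum_(k < n.+1) d k * ((- (4%:R)^-1) ^+ k * ((Ea n.+1 2%:R - 1) ^+ k)`_n).
  rewrite /DU poly_def linear_sum coef_sum; apply: eq_bigr => k _.
  rewrite (_ : poly_comp_poly__canonical__GRing_Linear U (d k *: 'X^k) = (d k *: 'X^k) \Po U) //.
  by rewrite comp_polyZ comp_Xn_poly coefZ hU2 exprZn coefZ.
have -> : B n = (n`!)%:R * (B n / (n`!)%:R).
  have := fact_neq0 n => hf; field; by rewrite hf.
rewrite -hn hDU mulr_sumr; apply: eq_bigr => k _.
have Hs := stirling_coef _ 2%:R _ k (ltnSn n).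
set F := ((Ea n.+1 2%:R - 1) ^+ k)`_n in Hs *.
have -> : (n`!)%:R * (d k * ((- (4%:R)^-1) ^+ k * F))
          = d k * (- (4%:R)^-1) ^+ k * (F * (n`!)%:R) by ring.
rewrite Hs.
rewrite expfzDr // -exprnP -exprnN exprM.
rewrite -[- (4%:R)^-1]mulN1r exprMn exprVn.
have -> : (2%:R : K) ^+ 2 = 4%:R by rewrite expr2 -natrM.
have h4k : (4%:R : K) ^+ k != 0 := expf_neq0 k h4.
field. by rewrite h4k.
Qed.

End Aux.

Theorem theorem4 (K : fieldType) (q lq : K) (B d : nat -> K) :
  [pchar K] =i pred0 -> q != 1 -> lq != 0 ->
  is_qBernoulli q lq B -> is_dq q lq d ->
  forall n : nat,
    B n = \sum_(k < n.+1)
            (-1) ^+ k * (2%:R : K) ^ (n%:Z - (2 * k)%:Z) * k`!%:R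
            * (stirling2 n k)%:R * d k.
Proof.
move=> HK; exact: (@main_thm K HK).
Qed.
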